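(* Let $(K,\mathrm{val})$ be a $2$-henselian valued field whose residue class field $F$ has characteristic $\neq2$, let $A$ be a subring with $B\subseteq A\subseteq K$ and $H=\mathrm{val}(A^\times)$. Then the map $$\Theta:\mathfrak X_A\to\mathcal T_F^{H\cup G_{\ge e}},\qquad \Theta(\mathcal M)=\big(M_g^A(\mathcal M)\big)_{g\in H\cup G_{\ge e}}$$ is well defined and bijective, with inverse $(M_g)_{g}\mapsto\bigcup_{g\in H\cup G_{\ge e}}\Phi^A(M_g,[\![g]\!])$.
   Context: Let $(G,\le)$ be a totally ordered abelian group written multiplicatively with identity $e$; $G_{\ge e}=\{g\in G:g\ge e\}$, $G^2=\{g^2:g\in G\}$. Let $(K,\mathrm{val})$ be a valued field with surjective valuation $\mathrm{val}:K\to G\cup\{\infty\}$, valuation ring $B=\{x:\mathrm{val}(x)\ge e\}$, residue map $\pi:B\to F$, residue field $F$. A strict unit is $x\in B^\times$ with $\pi(x)=1$; when $\mathrm{char}F\ne2$, $2$-henselian is equivalent to every strict unit being a square in $K$. For a subring $A$ with $B\subseteq A\subseteq K$ put $H=\mathrm{val}(A^\times)$; $H$ is a convex subgroup of $G$ and $\mathrm{val}(A\setminus\{0\})=H\cup G_{\ge e}$. For $g\in G$: $\overline g$ is its class in $G/G^2$, $[\![g]\!]$ its class in $G/H^2$, $[g]$ its class in $G/H$; ''$\mathrm{val}(x)=\overline g$'' means $\overline{\mathrm{val}(x)}=\overline g$, similarly for $[\![\cdot]\!]$. A quasi-quadratic module in a commutative ring $R$ is a subset $M\subseteq R$ with $M+M\subseteq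 M$ and $a^2M\subseteq M$ for all $a\in R$; $\mathfrak X_R$ is the set of all quasi-quadratic modules in $R$. $\mathcal T_F^{H\cup G_{\ge e}}$ is the set of families $(M_g)_{g\in H\cup G_{\ge e}}\in\prod_{g\in H\cup G_{\ge e}}\mathfrak X_F$ such that $M_g\subseteq M_h$ whenever $[\![g]\!]=[\![h]\!]$, or ($g\le h$ and $\overline g=\overline h$), or ($M_g=F$ and ($[g]=[h]$ or $g\le h$)). A pseudo-angular component map is a map $\mathrm{p.an}:K^\times\to F^\times$ such that: (1) $\mathrm{p.an}(u)=\pi(u)$ for $u\in B^\times$; (2) $\mathrm{p.an}(ux)=\pi(u)\mathrm{p.an}(x)$ for $u\in B^\times,x\in K^\times$; (3) for all $g\in G$, $c\in F^\times$ there is $w\in K$ with $\mathrm{val}(w)=g$, $\mathrm{p.an}(w)=c$; (4) for nonzero $x_1,x_2$ with $x_1+x_2\ne0$: if $\mathrm{val}(x_1)<\mathrm{val}(x_2)$ then $\mathrm{p.an}(x_1+x_2)=\mathrm{p.an}(x_1)$; if $\mathrm{val}(x_1)=\mathrm{val}(x_2)$ and $\mathrm{p.an}(x_1)+\mathrm{p.an}(x_2)\ne0$ then $\mathrm{val}(x_1+x_2)=\mathrm{val}(x_1)$ and $\mathrm{p.an}(x_1+x_2)=\mathrm{p.an}(x_1)+\mathrm{p.an}(x_2)$; (5) if $x,y\in K^\times$, $\overline{\mathrm{val}(x)}=\overline{\mathrm{val}(y)}$ and $\mathrm{p.an}(x)=\mathrm{p.an}(y)$ then $y=u^2x$ for some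 $u\in K^\times$; (6) for $a,u\in K^\times$ there is $k\in F^\times$ with $\mathrm{p.an}(au^2)=\mathrm{p.an}(a)k^2$. Such a map exists under the hypotheses; fix one. For $g\in G$ and a quasi-quadratic module $M$ in $F$: $$\Phi^A(M,[\![g]\!])=\{x\in A\setminus\{0\}:\ \mathrm{val}(x)=\overline g,\ (\mathrm{val}(x)=[\![g]\!]\ \text{or}\ \mathrm{val}(x)>g),\ \mathrm{p.an}(x)\in M\}\cup\{0\}.$$ For a quasi-quadratic module $\mathcal M$ in $A$ and $g\in G$: $M_g^A(\mathcal M)=\{\mathrm{p.an}(x):x\in\mathcal M\setminus\{0\},\ \mathrm{val}(x)=g\}\cup\{0\}$. *)

(* Defs.v *)
From HB Require Import structures.
From mathcomp Require Import all_boot all_order all_algebra.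
Set Implicit Arguments. Unset Strict Implicit. Unset Printing Implicit Defensive.
Import Order.TTheory GRing.Theory.
Local Open Scope ring_scope.

Section Defs.
(* The value group G is written ADDITIVELY: e = 0, g*h = g + h, g^2 = g + g. *)
Variable G : zmodType.
Variable le : G -> G -> Prop.

Definition lt (g h : G) : Prop := le g h /\ g <> h.

Definition ordered_abelian_group : Prop :=
  (forall g, le g g) /\
  (forall g h, le g h -> le h g -> g = h) /\
  (forall g h k, le g h -> le h k -> le g k) /\
  (forall g h, le g h \/ le h g) /\
  (forall g h k, le g h -> le (g + k) (h + k)).

Variable K : fieldType.
(* val is the valuation on K^x; val(0) = infinity is handled by treating 0 separately *)
Variable val : K -> G.

Definition valuation : Prop :=
  (forall x y, x != 0 -> y != 0 -> val (x * y) = val x + val y) /\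
  (forall x y, x != 0 -> y != 0 -> x + y != 0 ->
     le (val x) (val (x + y)) \/ le (val y) (val (x + y))) /\
  (forall g, exists x, x != 0 /\ val x = g).

Definition valring (x : K) : Prop := x = 0 \/ le 0 (val x).
Definition Bunit (x : K) : Prop := x != 0 /\ val x = 0.

Variable F : fieldType.
Variable res : K -> F.

(* res restricted to B is a surjective ring morphism B -> F with kernel the
   maximal ideal {x | val x > e} u {0}, i.e. F is the residue field *)
Definition residue_map : Prop :=
  (forall x y, valring x -> valring y -> res (x + y) = res x + res y) /\
  (forall x y, valring x -> valring y -> res (x * y) = res x * res y) /\
  res 1 = 1 /\
  (forall c, exists x, valring x /\ res x = c) /\
  (forall x, valring x -> (res x = 0 <-> (x = 0 \/ lt 0 (val x)))).

Definition strict_unit (x : K) : Prop := Bunit x /\ res x = 1.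

(* for char F <> 2, 2-henselian <-> every strict unit is a square *)
Definition two_henselian : Prop :=
  forall x, strict_unit x -> exists y, x = y ^+ 2.

Definition cls2 (g h : G) : Prop := exists k, g - h = k + k.

Variable A : K -> Prop.

Definition subring_over_B : Prop :=
  (forall x, valring x -> A x) /\
  (forall x y, A x -> A y -> A (x + y)) /\
  (forall x, A x -> A (- x)) /\
  (forall x y, A x -> A y -> A (x * y)).

Definition Hgrp (g : G) : Prop :=
  exists x, x != 0 /\ A x /\ A x^-1 /\ val x = g.

Definition clsH2 (g h : G) : Prop := exists k, Hgrp k /\ g - h = k + k.
Definition clsH (g h : G) : Prop := Hgrp (g - h).

Definition Dom (g : G) : Prop := Hgrp g \/ le 0 g.

(* quasi-quadratic modules in A (subsets of A) and in F;
   0 \in M, i.e. M nonempty *)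
Definition qqmA (M : K -> Prop) : Prop :=
  (forall x, M x -> A x) /\ M 0 /\
  (forall x y, M x -> M y -> M (x + y)) /\
  (forall a x, A a -> M x -> M (a ^+ 2 * x)).

Definition qqmF (M : F -> Prop) : Prop :=
  M 0 /\
  (forall x y, M x -> M y -> M (x + y)) /\
  (forall a x, M x -> M (a ^+ 2 * x)).

(* the set T_F^{H u G>=e}; families indexed by g with Dom g *)
Definition inT (M : G -> F -> Prop) : Prop :=
  (forall g, Dom g -> qqmF (M g)) /\
  (forall g h, Dom g -> Dom h ->
     (clsH2 g h \/ (le g h /\ cls2 g h) \/
      ((forall c, M g c) /\ (clsH g h \/ le g h))) ->
     forall c, M g c -> M h c).

Variable pan : K -> F.

Definition pseudo_angular : Prop :=
  (forall x, x != 0 -> pan x != 0) /\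
  (forall u, Bunit u -> pan u = res u) /\
  (forall u x, Bunit u -> x != 0 -> pan (u * x) = res u * pan x) /\
  (forall g c, c != 0 -> exists w, w != 0 /\ val w = g /\ pan w = c) /\
  (forall x1 x2, x1 != 0 -> x2 != 0 -> x1 + x2 != 0 ->
     (lt (val x1) (val x2) -> pan (x1 + x2) = pan x1) /\
     (val x1 = val x2 -> pan x1 + pan x2 != 0 ->
        val (x1 + x2) = val x1 /\ pan (x1 + x2) = pan x1 + pan x2)) /\
  (forall x y, x != 0 -> y != 0 -> cls2 (val x) (val y) -> pan x = pan y ->
     exists u, u != 0 /\ y = u ^+ 2 * x) /\
  (forall a u, a != 0 -> u != 0 ->
     exists k, k != 0 /\ pan (a * u ^+ 2) = pan a * k ^+ 2).

Definition PhiA (M : F -> Prop) (g : G) (x : K) : Prop :=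
  x = 0 \/
  (A x /\ x != 0 /\ cls2 (val x) g /\
   (clsH2 (val x) g \/ lt g (val x)) /\ M (pan x)).

Definition MgA (calM : K -> Prop) (g : G) (c : F) : Prop :=
  c = 0 \/ exists x, calM x /\ x != 0 /\ val x = g /\ pan x = c.

Definition Theta (calM : K -> Prop) : G -> F -> Prop := fun g => MgA calM g.

Definition Psi (M : G -> F -> Prop) (x : K) : Prop :=
  exists g, Dom g /\ PhiA (M g) g x.

End Defs.

(* Main.v *)
Require Import Defs.
From HB Require Import structures.
From mathcomp Require Import all_boot all_order all_algebra.
From mathcomp Require Import ring.
From Stdlib Require Import FunctionalExtensionality PropExtensionality.
Import GRing.Theory.
Local Open Scope ring_scope.

Section S.
Variables (G : zmodType) (le : G -> G -> Prop) (K F : fieldType)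
  (val : K -> G) (res : K -> F) (A : K -> Prop) (pan : K -> F).
Hypothesis Hog : ordered_abelian_group le.
Hypothesis Hval : valuation le val.
Hypothesis Hres : residue_map le val res.
Hypothesis H2 : (2%:R : F) != 0.
Hypothesis Hsub : subring_over_B le val A.
Hypothesis Hpan : pseudo_angular le val res pan.

Lemma le_refl (g : G) : le g g. Proof. by case: Hog => H _; apply: H. Qed.
Lemma le_anti {g h : G} : le g h -> le h g -> g = h. Proof. by case: Hog => _ [H _]; apply: H. Qed.
Lemma le_trans {g h k : G} : le g h -> le h k -> le g k. Proof. by case: Hog => _ [_ [H _]]; apply: H. Qed.
Lemma le_total (g h : G) : le g h \/ le h g. Proof. by case: Hog => _ [_ [_ [H _]]]; apply: H. Qed.
Lemma leD2r (g h k : G) : le g h -> le (g + k) (h + k). Proof. by case: Hog => _ [_ [_ [_ H]]]; apply: H. Qed.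

Lemma twice0 {k : G} : k + k = 0 -> k = 0.
Proof.
move=> E; case: (le_total 0 k) => H.
  have := @leD2r _ _ k H; rewrite add0r E => H'; exact: le_anti.
have := @leD2r _ _ k H; rewrite add0r E => H'; exact: le_anti.
Qed.

Lemma twice_ge0 {k : G} : le 0 (k + k) -> le 0 k.
Proof.
move=> H; case: (le_total 0 k) => // H'.
have := @leD2r _ _ k H'; rewrite add0r => H''; exact: le_trans H H''.
Qed.

Lemma le_addr (g a : G) : le 0 a -> le g (g + a).
Proof. by move=> H; have := @leD2r _ _ g H; rewrite add0r addrC. Qed.

Lemma le_subr {g h : G} : le g h -> le 0 (h - g).
Proof. by move=> H; have := @leD2r _ _ (- g) H; rewrite subrr. Qed.

Lemma le_subl {g h : G} : le 0 (h - g) -> le g h.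
Proof. by move=> H; have := @leD2r _ _ g H; rewrite add0r subrK. Qed.

Lemma le_add0 {a b : G} : le 0 a -> le 0 b -> le 0 (a + b).
Proof. move=> Ha Hb; apply: le_trans Hb _; rewrite addrC; exact: le_addr. Qed.

Lemma cls2_sym {g h : G} : cls2 g h -> cls2 h g.
Proof. by case=> k E; exists (- k); rewrite -opprD -E opprB. Qed.

Lemma cls2_refl (g : G) : cls2 g g.
Proof. by exists 0; rewrite subrr addr0. Qed.

Lemma twice_eq {a b : G} : a + a = b + b -> a = b.
Proof.
move=> E; apply/eqP; rewrite -subr_eq0; apply/eqP; apply: twice0.
by rewrite addrACA E -opprD subrr.
Qed.

Lemma valM {x y} : x != 0 -> y != 0 -> val (x * y) = val x + val y.
Proof. by case: Hval => H _; apply: H. Qed.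
Lemma valU {x y} : x != 0 -> y != 0 -> x + y != 0 ->
     le (val x) (val (x + y)) \/ le (val y) (val (x + y)).
Proof. by case: Hval => _ [H _]; apply: H. Qed.
Lemma valS g : exists x, x != 0 /\ val x = g.
Proof. by case: Hval => _ [_ H]. Qed.

Lemma val1 : val 1 = 0.
Proof.
have := valM (oner_neq0 K) (oner_neq0 K); rewrite mulr1 => E.
by apply: (addrI (val 1)); rewrite addr0 -E.
Qed.

Lemma valN1 : val (-1) = 0.
Proof.
have n1 : (-1 : K) != 0 by rewrite oppr_eq0 oner_neq0.
have := valM n1 n1; rewrite mulrNN mulr1 val1 => E.
by apply: twice0; rewrite -E.
Qed.

Lemma valN x : x != 0 -> val (- x) = val x.
Proof.
move=> x0; have n1 : (-1 : K) != 0 by rewrite oppr_eq0 oner_neq0.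
by rewrite -mulN1r (valM n1 x0) valN1 add0r.
Qed.

Lemma valV x : x != 0 -> val (x^-1) = - val x.
Proof.
move=> x0; have xi : x^-1 != 0 by rewrite invr_eq0.
have := valM x0 xi; rewrite mulfV // val1 => E.
by apply: (addrI (val x)); rewrite -E subrr.
Qed.

Lemma valX2 a : a != 0 -> val (a ^+ 2) = val a + val a.
Proof. by move=> a0; rewrite expr2 (valM a0 a0). Qed.

Lemma lt_add_val {x y} : x != 0 -> y != 0 -> x + y != 0 -> lt le (val x) (val y) ->
  val (x + y) = val x.
Proof.
move=> x0 y0 s0 [lxy nxy].
have ny0 : - y != 0 by rewrite oppr_eq0.
have e : x + y + - y = x by rewrite addrK.
have := @valU (x + y) (- y) s0 ny0; rewrite e valN // => /(_ x0) [H|H]; last first.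
  by case: nxy; apply: le_anti.
apply: le_anti => //.
case: (valU x0 y0 s0) => // H'; exact: le_trans lxy H'.
Qed.

Lemma vr0 : valring le val 0. Proof. by left. Qed.
Lemma vr1 : valring le val 1. Proof. by right; rewrite val1; apply: le_refl. Qed.
Lemma vrN {x} : valring le val x -> valring le val (- x).
Proof.
case=> [->|H]; first by rewrite oppr0; left.
have [->|x0] := eqVneq x 0; first by rewrite oppr0; left.
by right; rewrite valN.
Qed.
Lemma vrD {x y} : valring le val x -> valring le val y -> valring le val (x + y).
Proof.
case=> [->|Hx]; first by rewrite add0r.
case=> [->|Hy]; first by rewrite addr0; right.
have [->|x0] := eqVneq x 0; first by rewrite add0r; right.
have [->|y0] := eqVneq y 0; first by rewrite addr0; right.
have [->|s0] := eqVneq (x + y) 0; first by left.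
right; case: (valU x0 y0 s0) => H; [exact: le_trans Hx H|exact: le_trans Hy H].
Qed.
Lemma vrM {x y} : valring le val x -> valring le val y -> valring le val (x * y).
Proof.
case=> [->|Hx]; first by rewrite mul0r; left.
case=> [->|Hy]; first by rewrite mulr0; left.
have [->|x0] := eqVneq x 0; first by rewrite mul0r; left.
have [->|y0] := eqVneq y 0; first by rewrite mulr0; left.
by right; rewrite (valM x0 y0); apply: le_add0.
Qed.
Lemma vrA {x} : valring le val x -> A x. Proof. by case: Hsub => H _; apply: H. Qed.
Lemma AD {x y} : A x -> A y -> A (x + y). Proof. by case: Hsub => _ [H _]; apply: H. Qed.
Lemma AN {x} : A x -> A (- x). Proof. by case: Hsub => _ [_ [H _]]; apply: H. Qed.
Lemma AM {x y} : A x -> A y -> A (x * y). Proof. by case: Hsub => _ [_ [_ H]]; apply: H. Qed.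
Lemma A0 : A 0. Proof. exact: vrA vr0. Qed.
Lemma A1 : A 1. Proof. exact: vrA vr1. Qed.

Lemma resD {x y} : valring le val x -> valring le val y -> res (x + y) = res x + res y.
Proof. by case: Hres => H _; apply: H. Qed.
Lemma resM {x y} : valring le val x -> valring le val y -> res (x * y) = res x * res y.
Proof. by case: Hres => _ [H _]; apply: H. Qed.
Lemma res1 : res 1 = 1. Proof. by case: Hres => _ [_ [H _]]. Qed.
Lemma resS c : exists x, valring le val x /\ res x = c.
Proof. by case: Hres => _ [_ [_ [H _]]]. Qed.
Lemma resK {x} : valring le val x -> (res x = 0 <-> (x = 0 \/ lt le 0 (val x))).
Proof. by case: Hres => _ [_ [_ [_ H]]]; apply: H. Qed.
Lemma res0 : res 0 = 0.
Proof.
have := resD vr0 vr0; rewrite addr0 => E.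
by apply: (addrI (res 0)); rewrite addr0 -E.
Qed.
Lemma resN {x} : valring le val x -> res (- x) = - res x.
Proof.
move=> Hx; have := resD Hx (vrN Hx); rewrite subrr res0 => E.
by apply: (addrI (res x)); rewrite subrr E.
Qed.

Lemma Bunit_vr {u} : Bunit val u -> valring le val u.
Proof. by case=> _ E; right; rewrite E; apply: le_refl. Qed.

Lemma Bunit_ex {c} : c != 0 -> exists u, Bunit val u /\ res u = c.
Proof.
move=> c0; have [x [Hx E]] := resS c.
have x0 : x != 0 by apply: contra_neq c0 => x0; rewrite -E x0 res0.
exists x; split=> //; split=> //.
case: Hx => [x00|Hx]; first by rewrite x00 eqxx in x0.
have [//|ne] := eqVneq (val x) 0.
have : res x = 0 by apply/(resK (or_intror Hx)); right; split=> // e; rewrite e eqxx in ne.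
by move=> r0; rewrite -E r0 eqxx in c0.
Qed.

Lemma pan_neq0 {x} : x != 0 -> pan x != 0. Proof. by case: Hpan => H _; apply: H. Qed.
Lemma panB {u} : Bunit val u -> pan u = res u. Proof. by case: Hpan => _ [H _]; apply: H. Qed.
Lemma panBM {u x} : Bunit val u -> x != 0 -> pan (u * x) = res u * pan x.
Proof. by case: Hpan => _ [_ [H _]]; apply: H. Qed.
Lemma panS g {c} : c != 0 -> exists w, w != 0 /\ val w = g /\ pan w = c.
Proof. by case: Hpan => _ [_ [_ [H _]]]; apply: H. Qed.
Lemma panAdd {x1 x2} : x1 != 0 -> x2 != 0 -> x1 + x2 != 0 ->
     (lt le (val x1) (val x2) -> pan (x1 + x2) = pan x1) /\
     (val x1 = val x2 -> pan x1 + pan x2 != 0 ->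
        val (x1 + x2) = val x1 /\ pan (x1 + x2) = pan x1 + pan x2).
Proof. by case: Hpan => _ [_ [_ [_ [H _]]]]; apply: H. Qed.
Lemma panSq {x y} : x != 0 -> y != 0 -> cls2 (val x) (val y) -> pan x = pan y ->
     exists u, u != 0 /\ y = u ^+ 2 * x.
Proof. by case: Hpan => _ [_ [_ [_ [_ [H _]]]]]; apply: H. Qed.
Lemma panK {a u} : a != 0 -> u != 0 ->
     exists k, k != 0 /\ pan (a * u ^+ 2) = pan a * k ^+ 2.
Proof. by case: Hpan => _ [_ [_ [_ [_ [_ H]]]]]; apply: H. Qed.

Lemma BunitN1 : Bunit val (-1). Proof. by split; [rewrite oppr_eq0 oner_neq0|exact: valN1]. Qed.
Lemma Bunit_sq {u} : Bunit val u -> Bunit val (u ^+ 2).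
Proof. by case=> u0 e; split; [rewrite expf_neq0|rewrite valX2 // e addr0]. Qed.
Lemma res_sq {u} : valring le val u -> res (u ^+ 2) = res u ^+ 2.
Proof. by move=> H; rewrite !expr2 resM. Qed.
Lemma resN1 : res (-1) = -1. Proof. by rewrite resN ?res1 //; exact: vr1. Qed.
Lemma panN {x} : x != 0 -> pan (- x) = - pan x.
Proof. by move=> x0; rewrite -mulN1r (panBM BunitN1 x0) resN1 mulN1r. Qed.

Lemma two_neq0 : (1 + 1 : K) != 0.
Proof.
apply: contra_neq H2 => E.
by rewrite mulr2n -res1 -resD ?E ?res0 //; exact: vr1.
Qed.

Lemma val_twice_zero {u} : u != 0 -> val u + val u = 0 -> valring le val u.
Proof. by move=> _ /twice0 E; right; rewrite E; apply: le_refl. Qed.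

Lemma half_A : A ((1 + 1 : K)^-1).
Proof.
apply: vrA; right; rewrite valV ?two_neq0 //.
have v2 : valring le val (1 + 1 : K) by apply: vrD; exact: vr1.
have [e|ne] := eqVneq (val (1 + 1 : K)) 0; first by rewrite e oppr0; apply: le_refl.
case: v2 => [e|H]; first by have := two_neq0; rewrite e eqxx.
have : res (1 + 1 : K) = 0.
  by apply/(resK (or_intror H)); right; split=> // e; rewrite -e eqxx in ne.
by rewrite resD ?res1; [rewrite -mulr2n => E; have := H2; rewrite E eqxx| exact: vr1 | exact: vr1].
Qed.

Lemma Hgrp0 : Hgrp val A 0.
Proof. by exists 1; rewrite oner_neq0 invr1 val1; split=> //; split; [exact: A1|split; [exact: A1|]]. Qed.
Lemma HgrpN {k} : Hgrp val A k -> Hgrp val A (- k).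
Proof.
case=> x [x0 [Ax [Axi e]]]; exists x^-1; rewrite invr_eq0 invrK valV // e.
by split=> //; split.
Qed.
Lemma clsH2_sym {g h} : clsH2 val A g h -> clsH2 val A h g.
Proof. by case=> k [Hk E]; exists (- k); split; [exact: HgrpN|rewrite -opprD -E opprB]. Qed.
Lemma clsH2_refl g : clsH2 val A g g.
Proof. by exists 0; split; [exact: Hgrp0|rewrite subrr addr0]. Qed.

Lemma Dom_val {x} : A x -> x != 0 -> Dom le val A (val x).
Proof.
move=> Ax x0; case: (le_total 0 (val x)) => H; first by right.
left; exists x; split=> //; split=> //; split=> //.
apply: vrA; right; rewrite valV //; have := @le_subr _ _ H; by rewrite sub0r.
Qed.

Lemma Hgrp_A {g w} : Hgrp val A g -> w != 0 -> val w = g -> A w.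
Proof.
case=> x [x0 [Ax [Axi e]]] w0 ew.
have -> : w = (w / x) * x by rewrite divfK.
apply: AM => //; apply: vrA; right.
rewrite (valM w0) ?invr_eq0 // valV // ew e subrr; exact: le_refl.
Qed.

Lemma Dom_A {g w} : Dom le val A g -> w != 0 -> val w = g -> A w.
Proof.
case=> [Hg|Hg] w0 ew; first exact: Hgrp_A Hg w0 ew.
by apply: vrA; right; rewrite ew.
Qed.

Section QA.
Variable M : K -> Prop.
Hypothesis HM : qqmA A M.
Lemma qA_A {x} : M x -> A x. Proof. by case: HM => H _; apply: H. Qed.
Lemma qA_0 : M 0. Proof. by case: HM => _ []. Qed.
Lemma qA_D {x y} : M x -> M y -> M (x + y). Proof. by case: HM => _ [_ [H _]]; apply: H. Qed.
Lemma qA_sq {a x} : A a -> M x -> M (a ^+ 2 * x). Proof. by case: HM => _ [_ [_ H]]; apply: H. Qed.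

Lemma sq_adjust {x z} : M x -> x != 0 -> A z -> z != 0 ->
  exists y, M y /\ y != 0 /\ val y = val x + val z + val z /\ pan y = pan x.
Proof.
move=> Mx x0 Az z0.
have [k [k0 Ek]] := panK x0 z0.
have [u [Bu ru]] := Bunit_ex (invr_neq0 k0).
have u0 : u != 0 by case: Bu.
have xz0 : x * z ^+ 2 != 0 by rewrite mulf_neq0 // expf_neq0.
exists ((u * z) ^+ 2 * x); split; first by apply: qA_sq => //; apply: AM => //; exact: vrA (Bunit_vr Bu).
split; first by rewrite mulf_neq0 // expf_neq0 // mulf_neq0.
have -> : (u * z) ^+ 2 * x = u ^+ 2 * (x * z ^+ 2) by ring.
split.
  rewrite (valM (expf_neq0 _ u0) xz0) (valM x0 (expf_neq0 _ z0)) !valX2 //.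
  by case: Bu => _ ->; rewrite addr0 add0r addrA.
rewrite (panBM (Bunit_sq Bu) xz0) (res_sq (Bunit_vr Bu)) ru Ek.
by rewrite mulrCA -exprMn mulVf // expr1n mulr1.
Qed.

Lemma neg_mod {x a} : M x -> M (- x) -> A a -> M (a * x).
Proof.
move=> Mx Mnx Aa.
have t := two_neq0.
have -> : a * x = ((a + 1) * (1 + 1)^-1) ^+ 2 * x + ((a - 1) * (1 + 1)^-1) ^+ 2 * (- x).
  by field.
apply: qA_D; apply: qA_sq => //; apply: AM; try exact: half_A.
  by apply: AD => //; exact: A1.
by apply: AD => //; apply: AN; exact: A1.
Qed.
End QA.

Lemma qqmF_full (M : F -> Prop) c : qqmF M -> c != 0 -> M c -> M (- c) -> forall d, M d.
Proof.
case=> _ [HD HS] c0 Mc Mnc d.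
have t : (1 + 1 : F) != 0 by rewrite -mulr2n.
have -> : d = ((d / c + 1) * (1 + 1)^-1) ^+ 2 * c + ((d / c - 1) * (1 + 1)^-1) ^+ 2 * (- c).
  by field; rewrite H2 c0.
by apply: HD; apply: HS.
Qed.

Lemma sq_rel {x y u} : x != 0 -> u != 0 -> y = u ^+ 2 * x -> val y = val x ->
  valring le val u.
Proof.
move=> x0 u0 -> E; apply: val_twice_zero => //.
move: E; rewrite (valM (expf_neq0 _ u0) x0) valX2 // => E.
by apply: (addIr (val x)); rewrite add0r.
Qed.

Lemma MgA_qqmF calM g : qqmA A calM -> qqmF (MgA val pan calM g).
Proof.
move=> HM; split; first by left.
split.
  move=> c1 c2 [->|[x1 [M1 [x10 [v1 p1]]]]]; first by rewrite add0r.
  move=> [->|[x2 [M2 [x20 [v2 p2]]]]]; first by rewrite addr0; right; exists x1.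
  have [s|s] := eqVneq (c1 + c2) 0; first by left.
  right.
  have xs0 : x1 + x2 != 0.
    apply: contra_neq s => e; rewrite -p1 -p2.
    have -> : x2 = - x1 by rewrite -(addKr x1 x2) e addr0.
    by rewrite panN // subrr.
  have [_ H] := panAdd x10 x20 xs0.
  have nz : pan x1 + pan x2 != 0 by rewrite p1 p2.
  have [Hv Hp] := H (etrans v1 (esym v2)) nz.
  exists (x1 + x2); split; first exact: qA_D.
  by rewrite Hv Hp p1 p2.
move=> a c [->|[x [Mx [x0 [vx px]]]]]; first by rewrite mulr0; left.
have [->|a0] := eqVneq a 0; first by rewrite expr0n mul0r; left.
have [u [Bu ru]] := Bunit_ex a0.
have u0 : u != 0 by case: Bu.
right; exists (u ^+ 2 * x); split; first exact: qA_sq (vrA (Bunit_vr Bu)) Mx.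
split; first by rewrite mulf_neq0 // expf_neq0.
split; first by rewrite (valM (expf_neq0 _ u0) x0) valX2 //; case: Bu => _ ->; rewrite addr0 add0r.
by rewrite (panBM (Bunit_sq Bu) x0) (res_sq (Bunit_vr Bu)) ru px.
Qed.

Lemma h_of_k (g h k : G) : g - h = k + k -> g + - k + - k = h.
Proof.
move=> E; have -> : h = g - (k + k) by rewrite -E opprB addrC subrK.
by rewrite opprD addrA.
Qed.

Lemma Theta_inT calM : qqmA A calM -> inT le val A (Theta val pan calM).
Proof.
move=> HM; split; first by move=> g _; apply: MgA_qqmF.
move=> g h Dg Dh Hc c; rewrite /Theta.
case: Hc => [[k [Hk E]]|[[lgh [k E]]|[full Hgh]]].
- move=> [->|[x [Mx [x0 [vx px]]]]]; first by left.
  case: Hk => x1 [x10 [Ax1 [Ax1i e1]]].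
  have [y [My [y0 [vy py]]]] := sq_adjust _ HM Mx x0 Ax1i (invr_neq0 x10).
  right; exists y; split=> //; split=> //; split=> //; last by rewrite py.
  by rewrite vy valV // e1 vx; apply: h_of_k.
- move=> [->|[x [Mx [x0 [vx px]]]]]; first by left.
  have l0 : le 0 (- k) by apply: twice_ge0; rewrite -opprD -E opprB; apply: le_subr.
  have [z [z0 vz]] := valS (- k).
  have Az : A z by apply: vrA; right; rewrite vz.
  have [y [My [y0 [vy py]]]] := sq_adjust _ HM Mx x0 Az z0.
  right; exists y; split=> //; split=> //; split=> //; last by rewrite py.
  by rewrite vy vz vx; apply: h_of_k.
- have [->|c0] := eqVneq c 0; first by left.
  move=> _.
  have [|[x [Mx [x0 [vx px]]]]] := full c; first by move=> e; rewrite e eqxx in c0.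
  have [|[x' [Mx' [x0' [vx' px']]]]] := full (- c).
    by move=> e; move: c0; rewrite -oppr_eq0 e eqxx.
  have nx0 : - x != 0 by rewrite oppr_eq0.
  have c2 : cls2 (val x') (val (- x)) by rewrite valN // vx vx'; apply: cls2_refl.
  have pe : pan x' = pan (- x) by rewrite panN // px px'.
  have [u [u0 eu]] := panSq x0' nx0 c2 pe.
  have ve : val (- x) = val x' by rewrite valN // vx vx'.
  have vu := sq_rel x0' u0 eu ve.
  have Mnx : calM (- x) by rewrite eu; apply: qA_sq => //; exact: vrA.
  have [w [w0 [vw pw]]] := panS h c0.
  have wx0 : w / x != 0 by rewrite mulf_neq0 // invr_eq0.
  have vwx : val (w / x) = h - g by rewrite (valM w0) ?invr_eq0 // valV // vw vx.
  have Awx : A (w / x).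
    case: Hgh => [cH|lg].
      apply: Hgrp_A wx0 vwx; rewrite -opprB; exact: HgrpN.
    by apply: vrA; right; rewrite vwx; apply: le_subr.
  right; exists (w / x * x); rewrite divfK //; split; last by [].
  by have := neg_mod _ HM Mx Mnx Awx; rewrite divfK.
Qed.

Definition Good (M : G -> F -> Prop) (x : K) : Prop :=
  x = 0 \/ (A x /\ x != 0 /\ M (val x) (pan x)).

Section T.
Variable M : G -> F -> Prop.
Hypothesis HM : inT le val A M.
Lemma inT_q {g} : Dom le val A g -> qqmF (M g). Proof. by case: HM => H _; apply: H. Qed.
Lemma inT_m {g h} : Dom le val A g -> Dom le val A h ->
     (clsH2 val A g h \/ (le g h /\ cls2 g h) \/
      ((forall c, M g c) /\ (clsH val A g h \/ le g h))) ->
     forall c, M g c -> M h c.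
Proof. by case: HM => _ H; apply: H. Qed.

Lemma Psi_Good x : Psi le val A pan M x <-> Good M x.
Proof.
split.
  case=> g [Dg [->|[Ax [x0 [c2 [hc Mg]]]]]]; first by left.
  right; split=> //; split=> //.
  apply: (inT_m Dg (Dom_val Ax x0)) Mg.
  case: hc => [h|[lg ne]]; first by left; exact: clsH2_sym.
  by right; left; split=> //; exact: cls2_sym.
case=> [->|[Ax [x0 Mv]]].
  by exists 0; split; [right; apply: le_refl|left].
exists (val x); split; first exact: Dom_val.
right; split=> //; split=> //; split; first exact: cls2_refl.
by split=> //; left; exact: clsH2_refl.
Qed.

Lemma Good_qqm : qqmA A (Good M).
Proof.
split; first by move=> x [->|[]]; [exact: A0|].
split; first by left.
split; last first.
  move=> a x Aa [->|[Ax [x0 Mv]]]; first by rewrite mulr0; left.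
  have [->|a0] := eqVneq a 0; first by rewrite expr0n mul0r; left.
  have a20 : a ^+ 2 != 0 by rewrite expf_neq0.
  have ax0 : a ^+ 2 * x != 0 by rewrite mulf_neq0.
  have Aax : A (a ^+ 2 * x) by rewrite expr2; apply: AM => //; apply: AM.
  right; split=> //; split=> //.
  have [k [k0 Ek]] := panK x0 a0.
  have vax : val (a ^+ 2 * x) = val x + - (- val a) + - (- val a).
    by rewrite (valM a20 x0) valX2 // !opprK addrC addrA.
  have Mw : M (val (a ^+ 2 * x)) (pan x).
    apply: (inT_m (Dom_val Ax x0) (Dom_val Aax ax0)) Mv.
    have E : val x - val (a ^+ 2 * x) = - val a + - val a.
      by rewrite vax !opprK !opprD !addrA subrr add0r.
    case: (Dom_val Aa a0) => [Ha|Ha].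
      by left; exists (- val a); split=> //; exact: HgrpN.
    right; left; split; last by exists (- val a).
    by rewrite vax !opprK -addrA; apply: le_addr; apply: le_add0.
  have Ep : pan (a ^+ 2 * x) = k ^+ 2 * pan x by rewrite mulrC Ek mulrC.
  rewrite Ep.
  by case: (inT_q (Dom_val Aax ax0)) => _ [_ HS]; apply: HS.
move=> x y [->|[Ax [x0 Mx]]]; first by rewrite add0r.
case=> [->|[Ay [y0 My]]]; first by rewrite addr0; right.
have [->|s0] := eqVneq (x + y) 0; first by left.
have As : A (x + y) by apply: AD.
right; split=> //; split=> //.
have [exy|nxy] := eqVneq (val x) (val y).
  have [_ H] := panAdd x0 y0 s0.
  have [ps|ps] := eqVneq (pan x + pan y) 0.
    have qx := inT_q (Dom_val Ax x0).
    have c0 := pan_neq0 x0.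
    have Mnx : M (val x) (- pan x).
      by rewrite -exy in My; have -> : - pan x = pan y by rewrite -(addKr (pan x) (pan y)) ps addr0.
    have full := @qqmF_full _ _ qx c0 Mx Mnx.
    apply: (inT_m (Dom_val Ax x0) (Dom_val As s0)) (full _).
    right; right; split=> //; right.
    by case: (valU x0 y0 s0) => // Hl; rewrite exy.
  have [Hv Hp] := H exy ps.
  rewrite Hv Hp; case: (inT_q (Dom_val Ax x0)) => _ [HD _]; apply: HD => //.
  by rewrite exy.
case: (le_total (val x) (val y)) => Hl.
  have lt : lt le (val x) (val y) by split=> // e; rewrite e eqxx in nxy.
  by have [H _] := panAdd x0 y0 s0; rewrite (H lt) (lt_add_val x0 y0 s0 lt).
have lt : lt le (val y) (val x) by split=> // e; rewrite e eqxx in nxy.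
have s0' : y + x != 0 by rewrite addrC.
by have [H _] := panAdd y0 x0 s0'; rewrite addrC (H lt) (lt_add_val y0 x0 s0' lt).
Qed.
End T.

Lemma part3 calM : qqmA A calM -> Psi le val A pan (Theta val pan calM) = calM.
Proof.
move=> HM; apply: functional_extensionality => x.
apply: propositional_extensionality.
rewrite (Psi_Good _ (Theta_inT _ HM)); split.
  case=> [->|[Ax [x0 [p0|[y [My [y0 [vy py]]]]]]]]; first exact: qA_0 _ HM.
    by have := pan_neq0 x0; rewrite p0 eqxx.
  have c2 : cls2 (val y) (val x) by rewrite vy; apply: cls2_refl.
  have [u [u0 eu]] := panSq y0 x0 c2 py.
  have ve : val x = val y by rewrite vy.
  have vu := sq_rel y0 u0 eu ve.
  by rewrite eu; apply: qA_sq => //; exact: vrA.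
move=> Mx; have [->|x0] := eqVneq x 0; first by left.
right; split; first exact: (qA_A _ HM Mx).
by split=> //; right; exists x.
Qed.

Lemma part4 M : inT le val A M -> forall g, Dom le val A g ->
  Theta val pan (Psi le val A pan M) g = M g.
Proof.
move=> HM g Dg; apply: functional_extensionality => c.
apply: propositional_extensionality; rewrite /Theta; split.
  case=> [->|[x [Px [x0 [vx px]]]]].
    by case: (inT_q _ HM Dg).
  case/(Psi_Good _ HM): Px => [e|[_ [_ Mv]]]; first by rewrite e eqxx in x0.
  by rewrite -vx -px.
move=> Mc; have [->|c0] := eqVneq c 0; first by left.
have [w [w0 [vw pw]]] := panS g c0.
right; exists w; split=> //.
apply/(Psi_Good _ HM); right; split; first exact: Dom_A Dg w0 vw.
by split=> //; rewrite vw pw.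
Qed.

End S.

Theorem mainTheorem10
  (G : zmodType) (le : G -> G -> Prop) (K F : fieldType)
  (val : K -> G) (res : K -> F) (A : K -> Prop) (pan : K -> F) :
  ordered_abelian_group le ->
  valuation le val ->
  residue_map le val res ->
  (2%:R : F) != 0 ->
  two_henselian val res ->
  subring_over_B le val A ->
  pseudo_angular le val res pan ->
  (* Theta is well defined: X_A -> T *)
  (forall calM, qqmA A calM -> inT le val A (Theta val pan calM)) /\
  (* the proposed inverse maps T -> X_A *)
  (forall M, inT le val A M -> qqmA A (Psi le val A pan M)) /\
  (* Psi o Theta = id on X_A *)
  (forall calM, qqmA A calM -> Psi le val A pan (Theta val pan calM) = calM) /\
  (* Theta o Psi = id on T (families compared on the index set H u G>=e) *)
  (forall M, inT le val A M ->
     forall g, Dom le val A g -> Theta val pan (Psi le val A pan M) g = M g).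
Proof.
move=> Hog Hval Hres H2 _ Hsub Hpan.
split; first exact: (Theta_inT _ _ _ _ _ _ _ _ Hog Hval Hres H2 Hsub Hpan).
split.
  move=> M HM.
  have -> : Psi le val A pan M = Good G K F val A pan M.
    apply: functional_extensionality => x; apply: propositional_extensionality.
    exact: (Psi_Good _ _ _ _ _ _ _ Hog Hval Hsub M HM x).
  exact: (Good_qqm _ _ _ _ _ _ _ _ Hog Hval H2 Hsub Hpan M HM).
split; first exact: (part3 _ _ _ _ _ _ _ _ Hog Hval Hres H2 Hsub Hpan).
exact: (part4 _ _ _ _ _ _ _ _ Hog Hval Hsub Hpan).
Qed.
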